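(* For a restless bandit and a family $\mathcal F\subseteq 2^{N^{\{0,1\}}}$ as in the context, the following are equivalent: (1) $w^S_j>0$ for all $S\in\mathcal F$ and $j\in N^{\{0,1\}}$; (2) for all $S\in\mathcal F$, $b^S_j<b^{S\cup\{j\}}_j$ for every $j\in N^{\{0,1\}}\setminus S$, and $b^S_j>b^{S\setminus\{j\}}_j$ for every $j\in S$.
   Context: Restless bandit: finite state space $N=N^{\{0,1\}}\cup N^{\{1\}}$ (disjoint); actions $a\in\{0,1\}$; transition probabilities $p^a_{ij}$ with $p^1_{ij}=p^0_{ij}$ for $i\in N^{\{1\}}$; discount factor $\beta\in(0,1)$; activity weights $\theta^1_j>0$. For $S\subseteq N^{\{0,1\}}$ the $S$-active policy is active on $S\cup N^{\{1\}}$ and passive on $N^{\{0,1\}}\setminus S$; $b^S_i=E_i[\sum_{t\ge0}\theta^1_{X(t)}a(t)\beta^t]$ under it, from $X(0)=i$. Marginal workloads: $w^S_i=\theta^1_i1\{i\in N^{\{0,1\}}\}+\beta\sum_{j\in N}(p^1_{ij}-p^0_{ij})b^S_j$. $\mathcal F$ is a family of subsets of $N^{\{0,1\}}$. *)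

(* Defs.v *)
From HB Require Import structures.
From mathcomp Require Import all_boot all_order all_algebra.
From mathcomp Require Import all_classical all_reals all_analysis.
Set Implicit Arguments. Unset Strict Implicit. Unset Printing Implicit Defensive.
Import Order.TTheory GRing.Theory Num.Theory.
Local Open Scope ring_scope.

(* State space N = 'I_n; N01 : {set 'I_n} is N^{0,1}, its complement is N^{1}.
   p0 i j = p^0_{ij}, p1 i j = p^1_{ij}; th j = theta^1_j. *)

Definition stochastic (R : realType) (n : nat) (p : 'I_n -> 'I_n -> R) : Prop :=
  (forall i j, 0 <= p i j) /\ (forall i, \sum_(j < n) p i j = 1).

Definition active (n : nat) (N01 S : {set 'I_n}) (i : 'I_n) : bool :=
  (i \in S) || (i \notin N01).

Definition PS (R : realType) (n : nat) (N01 : {set 'I_n})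
  (p0 p1 : 'I_n -> 'I_n -> R) (S : {set 'I_n}) : 'M[R]_n :=
  \matrix_(i, j) (if active N01 S i then p1 i j else p0 i j).

(* b^S_i = E_i[ sum_t theta_{X(t)} a(t) beta^t ]
        = sum_{t>=0} beta^t sum_j P(X(t) = j | X(0) = i) theta_j a_S(j) *)
Definition bS (R : realType) (n : nat) (N01 : {set 'I_n})
  (p0 p1 : 'I_n -> 'I_n -> R) (beta : R) (th : 'I_n -> R)
  (S : {set 'I_n}) (i : 'I_n) : R :=
  limn (fun m => \sum_(t < m)
     beta ^+ t * \sum_(j < n) ((PS N01 p0 p1 S) ^+ t) i j
                   * (th j * (active N01 S j)%:R)).

Definition wS (R : realType) (n : nat) (N01 : {set 'I_n})
  (p0 p1 : 'I_n -> 'I_n -> R) (beta : R) (th : 'I_n -> R)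
  (S : {set 'I_n}) (i : 'I_n) : R :=
  th i * (i \in N01)%:R
  + beta * \sum_(j < n) (p1 i j - p0 i j) * bS N01 p0 p1 beta th S j.

(* Main.v *)
Require Import Defs.
From HB Require Import structures.
From mathcomp Require Import all_boot all_order all_algebra.
From mathcomp Require Import all_classical all_reals all_analysis.
Import Order.TTheory GRing.Theory Num.Theory.
Local Open Scope ring_scope.
From mathcomp Require Import lra ring.
Import numFieldNormedType.Exports.
Set Implicit Arguments. Unset Strict Implicit.

Definition rS (R : realType) (n : nat) (N01 : {set 'I_n}) (th : 'I_n -> R)
  (S : {set 'I_n}) (i : 'I_n) : R := th i * (active N01 S i)%:R.

Definition uS (R : realType) (n : nat) (N01 : {set 'I_n})
  (p0 p1 : 'I_n -> 'I_n -> R) (beta : R) (th : 'I_n -> R)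
  (S : {set 'I_n}) (i : 'I_n) (m : nat) : R :=
  \sum_(t < m) beta ^+ t * \sum_(j < n) ((PS N01 p0 p1 S) ^+ t) i j
                   * (th j * (active N01 S j)%:R).

Lemma PS_ge0 (R : realType) (n : nat) (N01 : {set 'I_n})
  (p0 p1 : 'I_n -> 'I_n -> R) S i k :
  stochastic p0 -> stochastic p1 -> 0 <= PS N01 p0 p1 S i k.
Proof. by move=> [h0 _] [h1 _]; rewrite mxE; case: ifP. Qed.

Lemma PS_sum (R : realType) (n : nat) (N01 : {set 'I_n})
  (p0 p1 : 'I_n -> 'I_n -> R) S i :
  stochastic p0 -> stochastic p1 -> \sum_k PS N01 p0 p1 S i k = 1.
Proof.
move=> [_ h0] [_ h1]; under eq_bigr do rewrite mxE.
by case: (active N01 S i).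
Qed.

Lemma pow_ge0 (R : realType) (n : nat) (N01 : {set 'I_n})
  (p0 p1 : 'I_n -> 'I_n -> R) S t i k :
  stochastic p0 -> stochastic p1 -> 0 <= ((PS N01 p0 p1 S) ^+ t) i k.
Proof.
move=> s0 s1; elim: t i k => [|t IH] i k.
  by rewrite expr0 mxE; case: (i == k).
rewrite exprS -mulmxE mxE; apply: sumr_ge0 => l _.
by apply: mulr_ge0; [apply: PS_ge0|apply: IH].
Qed.

Lemma u_rec (R : realType) (n : nat) (N01 : {set 'I_n})
  (p0 p1 : 'I_n -> 'I_n -> R) (beta : R) (th : 'I_n -> R) S i m :
  uS N01 p0 p1 beta th S i m.+1 = rS N01 th S i
    + beta * \sum_k PS N01 p0 p1 S i k * uS N01 p0 p1 beta th S k m.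
Proof.
rewrite /uS big_ord_recl /=; congr (_ + _).
  rewrite expr0 mul1r (bigD1 i) //= expr0 mxE eqxx mul1r big1 ?addr0 //.
  by move=> k /negbTE; rewrite mxE eq_sym => ->; rewrite mul0r.
rewrite mulr_sumr.
under [RHS]eq_bigr do rewrite mulr_sumr mulr_sumr.
rewrite exchange_big /=; apply: eq_bigr => t _.
rewrite /bump leq0n add1n !exprS -(@mulmxE R n).
under eq_bigr do rewrite mxE mulr_suml.
rewrite exchange_big /= mulr_sumr; apply: eq_bigr => k _.
rewrite !mulr_sumr; apply: eq_bigr => j _.
by ring.
Qed.

Lemma u_mono (R : realType) (n : nat) (N01 : {set 'I_n})
  (p0 p1 : 'I_n -> 'I_n -> R) (beta : R) (th : 'I_n -> R) S i m :
  stochastic p0 -> stochastic p1 -> 0 < beta -> (forall j, 0 < th j) ->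
  uS N01 p0 p1 beta th S i m <= uS N01 p0 p1 beta th S i m.+1.
Proof.
move=> s0 s1 b0 hth; rewrite /uS big_ord_recr /= lerDl.
apply: mulr_ge0; first by rewrite exprn_ge0 // ltW.
apply: sumr_ge0 => j _; apply: mulr_ge0; first exact: pow_ge0.
by apply: mulr_ge0; [apply: ltW|rewrite ler0n].
Qed.

Lemma r_le (R : realType) (n : nat) (N01 : {set 'I_n}) (th : 'I_n -> R) S i :
  (forall j, 0 < th j) -> rS N01 th S i <= \sum_k th k.
Proof.
move=> hth; rewrite /rS (bigD1 i) //=.
have : 0 <= \sum_(k | k != i) th k by apply: sumr_ge0 => k _; apply: ltW.
have := hth i.
by case: (active N01 S i); rewrite /= ?mulr1 ?mulr0; lra.
Qed.

Lemma u_bound (R : realType) (n : nat) (N01 : {set 'I_n})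
  (p0 p1 : 'I_n -> 'I_n -> R) (beta : R) (th : 'I_n -> R) S m :
  stochastic p0 -> stochastic p1 -> 0 < beta < 1 -> (forall j, 0 < th j) ->
  forall i, uS N01 p0 p1 beta th S i m <= (\sum_k th k) / (1 - beta).
Proof.
move=> s0 s1 /andP[b0 b1] hth.
have C0 : 0 <= \sum_k th k by apply: sumr_ge0 => k _; apply: ltW.
have b1' : 0 < 1 - beta by rewrite subr_gt0.
elim: m => [|m IH] i.
  by rewrite /uS big_ord0 divr_ge0 // ltW.
rewrite u_rec.
set C := \sum_k th k.
have h1 : \sum_k PS N01 p0 p1 S i k * uS N01 p0 p1 beta th S k m <= C / (1 - beta).
  have -> : C / (1 - beta) = \sum_k PS N01 p0 p1 S i k * (C / (1 - beta)) by rewrite -mulr_suml (@PS_sum R n N01 p0 p1 S i s0 s1) mul1r.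
  by apply: ler_sum => k _; apply: ler_wpM2l; [exact: PS_ge0 | exact: IH].
have h2 := @r_le R n N01 th S i hth.
have -> : C / (1 - beta) = C + beta * (C / (1 - beta)).
  by field; rewrite subr_eq0 eq_sym lt_eqF.
apply: lerD => //; rewrite ler_pM2l //.
Qed.

Lemma u_cvg (R : realType) (n : nat) (N01 : {set 'I_n})
  (p0 p1 : 'I_n -> 'I_n -> R) (beta : R) (th : 'I_n -> R) S i :
  stochastic p0 -> stochastic p1 -> 0 < beta < 1 -> (forall j, 0 < th j) ->
  (uS N01 p0 p1 beta th S i m @[m --> \oo] --> bS N01 p0 p1 beta th S i)%classic.
Proof.
move=> s0 s1 hb hth.
have hc : cvgn (uS N01 p0 p1 beta th S i).
  apply/cvg_ex; eexists; apply: nondecreasing_cvgn.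
    apply/nondecreasing_seqP => m; apply: u_mono => //; by case/andP: hb.
  exists ((\sum_k th k) / (1 - beta)) => _ [m _ <-]; exact: u_bound.
exact: hc.
Qed.

Lemma cvg_sumseq (R : realType) (n : nat) (s : seq 'I_n) (f : 'I_n -> nat -> R)
  (l : 'I_n -> R) :
  (forall k, (f k m @[m --> \oo] --> l k)%classic) ->
  ((\sum_(k <- s) f k m) @[m --> \oo] --> \sum_(k <- s) l k)%classic.
Proof.
move=> hf; elim: s => [|k s IH].
  rewrite big_nil; under eq_fun do rewrite big_nil; exact: cvg_cst.
rewrite big_cons; under eq_fun do rewrite big_cons.
exact: cvgD.
Qed.

Lemma bellman (R : realType) (n : nat) (N01 : {set 'I_n})
  (p0 p1 : 'I_n -> 'I_n -> R) (beta : R) (th : 'I_n -> R) S i :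
  stochastic p0 -> stochastic p1 -> 0 < beta < 1 -> (forall j, 0 < th j) ->
  bS N01 p0 p1 beta th S i = rS N01 th S i
    + beta * \sum_k PS N01 p0 p1 S i k * bS N01 p0 p1 beta th S k.
Proof.
move=> s0 s1 hb hth.
have Hl : (uS N01 p0 p1 beta th S i m.+1 @[m --> \oo] --> bS N01 p0 p1 beta th S i)%classic.
  by rewrite (cvg_shiftS (uS N01 p0 p1 beta th S i)); exact: u_cvg.
have Hr : ((rS N01 th S i + beta * \sum_k PS N01 p0 p1 S i k * uS N01 p0 p1 beta th S k m)
   @[m --> \oo] --> rS N01 th S i
    + beta * \sum_k PS N01 p0 p1 S i k * bS N01 p0 p1 beta th S k)%classic.
  apply: cvgD; first exact: cvg_cst.
  apply: cvgMl_tmp; apply: cvg_sumseq => k; apply: cvgMl_tmp; exact: u_cvg.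
apply: (cvg_unique _ Hl); first exact: Rhausdorff.
have E : (fun m => uS N01 p0 p1 beta th S i m.+1) = (fun m => rS N01 th S i + beta * \sum_k PS N01 p0 p1 S i k * uS N01 p0 p1 beta th S k m).
  by apply: funext => m; exact: u_rec.
rewrite /= E; exact: Hr.
Qed.

Lemma diff_gen (R : realType) (n : nat) (N01 : {set 'I_n})
  (p0 p1 : 'I_n -> 'I_n -> R) (beta : R) (th : 'I_n -> R) S1 S2 j :
  stochastic p0 -> stochastic p1 -> 0 < beta < 1 -> (forall j, 0 < th j) ->
  (forall i, i != j -> active N01 S1 i = active N01 S2 i) ->
  active N01 S1 j -> ~~ active N01 S2 j ->
  forall i, bS N01 p0 p1 beta th S1 i - bS N01 p0 p1 beta th S2 i =
    if i == j then th j + beta * \sum_k p1 j k * bS N01 p0 p1 beta th S1 k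
                   - beta * \sum_k p0 j k * bS N01 p0 p1 beta th S2 k
    else beta * \sum_k PS N01 p0 p1 S1 i k *
       (bS N01 p0 p1 beta th S1 k - bS N01 p0 p1 beta th S2 k).
Proof.
move=> s0 s1 hb hth hne a1 a2 i.
rewrite (@bellman R n N01 p0 p1 beta th S1 i s0 s1 hb hth) (@bellman R n N01 p0 p1 beta th S2 i s0 s1 hb hth).
case: eqP => [->|/eqP ij].
  rewrite /rS (negbTE a2) a1 /= mulr1 mulr0 add0r.
  under eq_bigr do rewrite mxE a1.
  by under [X in _ - beta * X]eq_bigr do rewrite mxE (negbTE a2).
rewrite /rS (hne i ij) opprD addrACA subrr add0r -mulrBr; congr (_ * _).
rewrite -sumrB; apply: eq_bigr => k _; rewrite mulrBr; congr (_ - _).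
by rewrite !mxE (hne i ij).
Qed.

Lemma key_nneg (R : realType) (n : nat) (Q : 'I_n -> 'I_n -> R) (beta w : R)
  (d : 'I_n -> R) (j : 'I_n) :
  (forall i k, 0 <= Q i k) -> (forall i, \sum_k Q i k = 1) -> 0 < beta < 1 ->
  (forall i, d i = (if i == j then w else 0) + beta * \sum_k Q i k * d k) ->
  0 <= w -> forall i, 0 <= d i.
Proof.
move=> Q0 Q1 /andP[b0 b1] hd w0.
have [k0 _ hmin] := @arg_minP _ R _ j xpredT d isT.
have hk : forall i, d k0 <= d i by move=> i; exact: hmin.
suff : 0 <= d k0 by move=> h i; exact: le_trans h (hk i).
have h1 : d k0 >= beta * d k0.
  rewrite [X in _ <= X]hd.
  have : beta * d k0 <= beta * \sum_k Q k0 k * d k.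
    rewrite ler_pM2l //.
    have -> : d k0 = \sum_k Q k0 k * d k0 by rewrite -mulr_suml Q1 mul1r.
    by apply: ler_sum => k _; rewrite ler_wpM2l.
  have : 0 <= (if k0 == j then w else 0) by case: ifP.
  by move=> hA hB; apply: le_trans hB _; rewrite lerDr.
have : (1 - beta) * d k0 >= 0 by rewrite mulrBl mul1r subr_ge0.
rewrite pmulr_rge0 //; lra.
Qed.

Lemma key (R : realType) (n : nat) (Q : 'I_n -> 'I_n -> R) (beta w : R)
  (d : 'I_n -> R) (j : 'I_n) :
  (forall i k, 0 <= Q i k) -> (forall i, \sum_k Q i k = 1) -> 0 < beta < 1 ->
  (forall i, d i = (if i == j then w else 0) + beta * \sum_k Q i k * d k) ->
  (0 < d j <-> 0 < w).
Proof.
move=> Q0 Q1 hb hd; split => h.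
  rewrite ltNge; apply/negP => wle.
  have := @key_nneg R n Q beta (- w) (fun i => - d i) j Q0 Q1 hb.
  move=> /(_ _ _ j) H.
  have : 0 <= - d j.
    apply: H; last by rewrite oppr_ge0.
    move=> i; rewrite hd opprD; congr (_ + _); first by case: ifP; rewrite ?oppr0.
    by rewrite -mulrN -sumrN; congr (_ * _); apply: eq_bigr => k _; rewrite mulrN.
  lra.
have H := @key_nneg R n Q beta w d j Q0 Q1 hb hd (ltW h).
rewrite hd eqxx.
have : 0 <= beta * \sum_k Q j k * d k.
  case/andP: hb => b0 _; apply: mulr_ge0; first exact: ltW.
  by apply: sumr_ge0 => k _; apply: mulr_ge0.
lra.
Qed.

Lemma case1 (R : realType) (n : nat) (N01 : {set 'I_n})
  (p0 p1 : 'I_n -> 'I_n -> R) (beta : R) (th : 'I_n -> R) (S : {set 'I_n}) (j : 'I_n) :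
  stochastic p0 -> stochastic p1 -> 0 < beta < 1 -> (forall j, 0 < th j) ->
  j \in N01 -> j \notin S ->
  (bS N01 p0 p1 beta th S j < bS N01 p0 p1 beta th (j |: S) j
     <-> 0 < wS N01 p0 p1 beta th S j).
Proof.
move=> s0 s1 hb hth jN jS.
rewrite -subr_gt0.
have a1 : active N01 (j |: S) j by rewrite /active setU11.
have a2 : ~~ active N01 S j by rewrite /active (negbTE jS) jN.
have hne : forall i, i != j -> active N01 (j |: S) i = active N01 S i.
  by move=> i ij; rewrite /active in_setU1 (negbTE ij).
apply: (@key R n (PS N01 p0 p1 (j |: S)) beta _
   (fun i => bS N01 p0 p1 beta th (j |: S) i - bS N01 p0 p1 beta th S i) j).
- by move=> i k; apply: PS_ge0.
- by move=> i; apply: PS_sum.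
- exact: hb.
move=> i; rewrite (@diff_gen R n N01 p0 p1 beta th (j |: S) S j s0 s1 hb hth hne a1 a2 i).
case: eqP => [->|_]; last by rewrite add0r.
rewrite /wS jN.
under [X in _ = _ + beta * X]eq_bigr do rewrite mxE a1 mulrBr.
under [X in _ = _ + beta * X + _]eq_bigr do rewrite mulrBl.
rewrite !sumrB /= mulr1; ring.
Qed.

Lemma case2 (R : realType) (n : nat) (N01 : {set 'I_n})
  (p0 p1 : 'I_n -> 'I_n -> R) (beta : R) (th : 'I_n -> R) (S : {set 'I_n}) (j : 'I_n) :
  stochastic p0 -> stochastic p1 -> 0 < beta < 1 -> (forall j, 0 < th j) ->
  S \subset N01 -> j \in S ->
  (bS N01 p0 p1 beta th (S :\ j) j < bS N01 p0 p1 beta th S j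
     <-> 0 < wS N01 p0 p1 beta th S j).
Proof.
move=> s0 s1 hb hth SN jS.
have jN : j \in N01 by apply: (fintype.subsetP SN).
rewrite -subr_gt0.
have a1 : active N01 S j by rewrite /active jS.
have a2 : ~~ active N01 (S :\ j) j by rewrite /active setD11 jN.
have hne : forall i, i != j -> active N01 S i = active N01 (S :\ j) i.
  by move=> i ij; rewrite /active in_setD1 ij.
have hrow : forall i k, i != j -> PS N01 p0 p1 S i k = PS N01 p0 p1 (S :\ j) i k.
  by move=> i k ij; rewrite !mxE hne.
apply: (@key R n (PS N01 p0 p1 (S :\ j)) beta _
   (fun i => bS N01 p0 p1 beta th S i - bS N01 p0 p1 beta th (S :\ j) i) j).
- by move=> i k; apply: PS_ge0.
- by move=> i; apply: PS_sum.
- exact: hb.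
move=> i; rewrite (@diff_gen R n N01 p0 p1 beta th S (S :\ j) j s0 s1 hb hth hne a1 a2 i).
case: eqP => [->|/eqP ij].
  rewrite /wS jN.
  under [X in _ = _ + beta * X]eq_bigr do rewrite mxE (negbTE a2) mulrBr.
  under [X in _ = _ + beta * X + _]eq_bigr do rewrite mulrBl.
  rewrite !sumrB /= mulr1; ring.
rewrite add0r; congr (_ * _); apply: eq_bigr => k _; by rewrite hrow.
Qed.

Unset Implicit Arguments. Set Strict Implicit.

Theorem proposition5 (R : realType) (n : nat) (N01 : {set 'I_n})
  (p0 p1 : 'I_n -> 'I_n -> R) (beta : R) (th : 'I_n -> R)
  (F : {set {set 'I_n}})
  (hp0 : stochastic p0) (hp1 : stochastic p1)
  (hN1 : forall i j, i \notin N01 -> p1 i j = p0 i j)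
  (hbeta : 0 < beta < 1)
  (hth : forall j, 0 < th j)
  (hF : forall S, S \in F -> S \subset N01) :
  (forall S, S \in F -> forall j, j \in N01 -> 0 < wS N01 p0 p1 beta th S j)
  <->
  (forall S, S \in F ->
     (forall j, j \in N01 :\: S ->
        bS N01 p0 p1 beta th S j < bS N01 p0 p1 beta th (j |: S) j)
     /\ (forall j, j \in S ->
        bS N01 p0 p1 beta th (S :\ j) j < bS N01 p0 p1 beta th S j)).
Proof.
split.
- move=> H S SF; have SN := hF S SF; split.
  + move=> j /setDP[jN jS].
    by apply: (@case1 R n N01 p0 p1 beta th S j hp0 hp1 hbeta hth jN jS).2; apply: H.
  + move=> j jS; have jN : j \in N01 by apply: (fintype.subsetP SN).
    by apply: (@case2 R n N01 p0 p1 beta th S j hp0 hp1 hbeta hth SN jS).2; apply: H.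
- move=> H S SF j jN; have SN := hF S SF; have [h1 h2] := H S SF.
  case: (boolP (j \in S)) => jS.
    by apply: (@case2 R n N01 p0 p1 beta th S j hp0 hp1 hbeta hth SN jS).1; apply: h2.
  apply: (@case1 R n N01 p0 p1 beta th S j hp0 hp1 hbeta hth jN jS).1; apply: h1.
  by rewrite finset.in_setD jS jN.
Qed.
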